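(* Let $N \ge 1$ agents $[N]=\{1,\dots,N\}$ be given with a distance function $\mathrm{dist}$ as in the context, let $n=\sum_{i=1}^N n_i$, and partition $n\times n$ matrices into $N\times N$ blocks accordingly. Fix $i\in[N]$. Let $L\in\mathbb{R}^{n\times n}$ be $(\tau,\rho)$-stable (with $\tau\ge 1$, $\rho>0$) and $(c_L,\gamma)$-SED with $c_L\ge 1$, $\gamma>0$, and let $M\in\mathbb{R}^{n\times n}$ be $(c_M,\gamma)$-SED away from $i$. Then the (unique) solution $P$ of the Lyapunov equation $P = L^\top P L + M$ is $(c_P,\gamma_P)$-SED away from $i$, where $$c_P = \frac{\|M\|\,\tau^2}{1-e^{-2\rho}} + 2c_M,\qquad \gamma_P = \frac{\rho\,\gamma}{\rho+\ln(N c_L)}.$$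
   Context: $\|\cdot\|$ denotes the Euclidean norm of vectors and the induced $\ell_2$ operator norm of matrices. There are $N$ agents $[N]=\{1,\dots,N\}$ embedded on an undirected graph; $\mathrm{dist}:[N]\times[N]\to\mathbb{R}_{\ge0}$ is the graph (shortest-path) distance, so $\mathrm{dist}(i,i)=0$, $\mathrm{dist}(i,j)=\mathrm{dist}(j,i)$, and $\mathrm{dist}(i,j)\le \mathrm{dist}(i,k)+\mathrm{dist}(k,j)$. Agent $i$ has dimensions $n_i$ (and $m_i$); a matrix $X\in\mathbb{R}^{\sum_i n_i\times\sum_i m_i}$ is partitioned into blocks $[X]_{lj}\in\mathbb{R}^{n_l\times m_j}$. Definition ($(\tau,\rho)$-stability): for $\tau\ge1,\rho>0$, a square matrix $X$ is $(\tau,\rho)$-stable if $\|X^k\|\le \tau e^{-\rho k}$ for all integers $k\ge0$. Definition (SED): the block matrix $X$ is $(c,\gamma)$-SED if $\|[X]_{lj}\|\le c\,e^{-\gamma\,\mathrm{dist}(l,j)}$ for all $l,j\in[N]$. Definition (SED away from $i$): for $i\in[N]$, the block matrix $X$ is $(c,\gamma)$-SED away from $i$ if $\|[X]_{lj}\|\le c\,e^{-\gamma\max(\mathrm{dist}(i,l),\mathrm{dist}(i,j))}$ for all $l,j\in[N]$. *)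

(* Defs.v *)
From HB Require Import structures.
From mathcomp Require Import all_boot all_order all_algebra.
From mathcomp Require Import all_classical all_reals all_analysis.
Set Implicit Arguments. Unset Strict Implicit. Unset Printing Implicit Defensive.
Import Order.TTheory GRing.Theory Num.Theory.
Local Open Scope classical_set_scope.
Local Open Scope ring_scope.

(* e : rel 'I_N is the (symmetric) adjacency relation of the undirected graph.
   gdist e i j = the least k < N such that there is an e-path of length k from
   i to j (a path [:: i = x_0; x_1; ...; x_k = j] with e x_t x_{t+1});
   for a connected graph this is the shortest-path distance. *)
Definition gdist (N : nat) (e : rel 'I_N) (i j : 'I_N) : nat :=
  find (fun k => [exists p : k.-tuple 'I_N, path e i p && (last i p == j)])
       (iota 0 N).

Definition graph_dist {R : realType} (N : nat) (e : rel 'I_N) (i j : 'I_N) : R :=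
  (gdist e i j)%:R.

Definition vnorm {R : realType} (m : nat) (v : 'cV[R]_m) : R :=
  Num.sqrt (\sum_(k < m) (v k 0) ^+ 2).

Definition opnorm {R : realType} (m n : nat) (A : 'M[R]_(m, n)) : R :=
  sup ((fun v : 'cV[R]_n => vnorm (A *m v)) @` [set v : 'cV[R]_n | vnorm v <= 1]).

Definition tr_stable {R : realType} (n : nat) (tau rho : R) (X : 'M[R]_n) : Prop :=
  forall k : nat, opnorm (X ^+ k) <= tau * expR (- (rho * k%:R)).

Definition blk {R : realType} (N : nat) (ni : 'I_N -> nat)
  (X : 'M[R]_(\sum_(l < N) ni l)) (l j : 'I_N) : 'M[R]_(ni l, ni j) :=
  @submxblock R N N ni ni X l j.

Definition SED {R : realType} (N : nat) (ni : 'I_N -> nat)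
  (dist : 'I_N -> 'I_N -> R) (c gamma : R) (X : 'M[R]_(\sum_(l < N) ni l)) : Prop :=
  forall l j : 'I_N, opnorm (blk X l j) <= c * expR (- (gamma * dist l j)).

Definition SED_away {R : realType} (N : nat) (ni : 'I_N -> nat)
  (dist : 'I_N -> 'I_N -> R) (i : 'I_N) (c gamma : R)
  (X : 'M[R]_(\sum_(l < N) ni l)) : Prop :=
  forall l j : 'I_N,
    opnorm (blk X l j) <= c * expR (- (gamma * Num.max (dist i l) (dist i j))).

(* Main.v *)
Require Import Defs.
From HB Require Import structures.
From mathcomp Require Import all_boot all_order all_algebra.
From mathcomp Require Import all_classical all_reals all_analysis.
From mathcomp Require Import ring lra zify.

Import Order.TTheory GRing.Theory Num.Theory.
Set Implicit Arguments. Unset Strict Implicit. Unset Printing Implicit Defensive.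

Section Dist.
Variables (N : nat) (e : rel 'I_N).
Hypothesis conn : forall a b : 'I_N, connect e a b.

Definition Pk (a b : 'I_N) k :=
  [exists p : k.-tuple 'I_N, path e a p && (last a p == b)].

Lemma reach_lt a b : exists k, (k < N)%N /\ Pk a b k.
Proof.
have /connectP [p pp lp] := conn a b.
rewrite lp; case: (shortenP pp) => p' pp' up' _.
exists (size p'); split.
  have : (size (a :: p') <= #|'I_N|)%N.
    by rewrite -(card_uniqP up') max_card.
  by rewrite card_ord.
by apply/existsP; exists (in_tuple p'); rewrite /= pp' eqxx.
Qed.

Lemma gdist_spec a b : (gdist e a b < N)%N /\ Pk a b (gdist e a b).
Proof.
have hh : has (Pk a b) (iota 0 N).
  case: (reach_lt a b) => k [hk pk]; apply/hasP; exists k => //.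
  by rewrite mem_iota.
have hf : (find (Pk a b) (iota 0 N) < N)%N.
  by have := hh; rewrite has_find size_iota.
split; first exact: hf.
by have := nth_find 0 hh; rewrite nth_iota // add0n.
Qed.

Lemma gdist_min a b k : (k < N)%N -> Pk a b k -> (gdist e a b <= k)%N.
Proof.
move=> hk pk; rewrite leqNgt; apply/negP => hlt.
by have := before_find 0 hlt; rewrite nth_iota // add0n; move: pk; rewrite /Pk => ->.
Qed.

Lemma gdist_tri a b c : (gdist e a c <= gdist e a b + gdist e b c)%N.
Proof.
case: (gdist_spec a b) => h1 /existsP [t1 /andP [p1 l1]].
case: (gdist_spec b c) => h2 /existsP [t2 /andP [p2 l2]].
case: (ltnP (gdist e a b + gdist e b c) N) => hs.
  apply: gdist_min => //; apply/existsP; exists (cat_tuple t1 t2).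
  rewrite /= cat_path p1 last_cat (eqP l1) p2 /=; exact: l2.
by apply: leq_trans hs; case: (gdist_spec a c) => /ltnW.
Qed.

Lemma gdist_refl a : (0 < N)%N -> gdist e a a = 0%N.
Proof.
move=> hN; apply/eqP; rewrite -leqn0; apply: gdist_min => //.
by apply/existsP; exists [tuple] => /=.
Qed.

End Dist.

Import Order.TTheory GRing.Theory Num.Theory.
Local Open Scope ring_scope.
Set Implicit Arguments. Unset Strict Implicit. Unset Printing Implicit Defensive.

Section Norms.
Variable R : realType.

Definition dotv m (u w : 'cV[R]_m) : R := \sum_(k < m) u k 0 * w k 0.

Lemma vnormE m (u : 'cV[R]_m) : vnorm u = Num.sqrt (dotv u u).
Proof. by rewrite /vnorm /dotv; congr Num.sqrt; apply eq_bigr => k _; rewrite expr2. Qed.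

Lemma dotv_ge0 m (u : 'cV[R]_m) : 0 <= dotv u u.
Proof. by apply: sumr_ge0 => k _; rewrite -expr2 sqr_ge0. Qed.

Lemma vnorm_ge0 m (u : 'cV[R]_m) : 0 <= vnorm u.
Proof. exact: sqrtr_ge0. Qed.

Lemma vnorm_sq m (u : 'cV[R]_m) : vnorm u ^+ 2 = dotv u u.
Proof. by rewrite vnormE sqr_sqrtr // dotv_ge0. Qed.

Lemma abs_le_vnorm m (u : 'cV[R]_m) k : `|u k 0| <= vnorm u.
Proof.
rewrite /vnorm -sqrtr_sqr ler_sqrt; last by apply: sumr_ge0 => j _; rewrite sqr_ge0.
rewrite (bigD1 k) //= lerDl; apply: sumr_ge0 => j _; exact: sqr_ge0.
Qed.

Lemma vnorm0_eq m (u : 'cV[R]_m) : vnorm u = 0 -> u = 0.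
Proof.
move=> h; apply/matrixP => k j; rewrite (ord1 j) mxE; apply/eqP.
by rewrite -normr_le0 -h abs_le_vnorm.
Qed.

Lemma vnorm0 m : vnorm (0 : 'cV[R]_m) = 0.
Proof. by rewrite /vnorm big1 ?sqrtr0 // => k _; rewrite mxE expr0n. Qed.

Lemma dotvDD m (u w : 'cV[R]_m) :
  dotv (u + w) (u + w) = dotv u u + 2 * dotv u w + dotv w w.
Proof.
rewrite /dotv mulr_sumr -!big_split /=; apply: eq_bigr => k _; rewrite !mxE.
ring.
Qed.

Lemma dotvC m (u w : 'cV[R]_m) : dotv u w = dotv w u.
Proof. by apply: eq_bigr => k _; rewrite mulrC. Qed.

Lemma dotv0l m (w : 'cV[R]_m) : dotv 0 w = 0.
Proof. by rewrite /dotv big1 // => k _; rewrite mxE mul0r. Qed.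

Lemma CS m (u w : 'cV[R]_m) : dotv u w <= vnorm u * vnorm w.
Proof.
set a := vnorm u; set b := vnorm w.
have ha : 0 <= a by exact: vnorm_ge0.
have hb : 0 <= b by exact: vnorm_ge0.
have key : 0 <= a * b * (a * b - dotv u w).
  have : 0 <= \sum_(k < m) (b * u k 0 - a * w k 0) ^+ 2.
    by apply: sumr_ge0 => k _; exact: sqr_ge0.
  have -> : \sum_(k < m) (b * u k 0 - a * w k 0) ^+ 2 =
     b ^+ 2 * dotv u u - 2 * a * b * dotv u w + a ^+ 2 * dotv w w.
    rewrite /dotv !mulr_sumr -sumrB -big_split /=; apply: eq_bigr => k _; ring.
  rewrite -!vnorm_sq -/a -/b => h; nra.
have [ha0|] := eqVneq a 0.
  by rewrite ha0 mul0r (vnorm0_eq ha0) dotv0l.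
have [hb0|] := eqVneq b 0.
  by rewrite hb0 mulr0 dotvC (vnorm0_eq hb0) dotv0l.
move=> hb0 ha0.
have hab : 0 < a * b by rewrite mulr_gt0 // lt0r ?ha0 ?hb0.
by move: key; rewrite pmulr_rge0 // subr_ge0.
Qed.

Lemma vnormD m (u w : 'cV[R]_m) : vnorm (u + w) <= vnorm u + vnorm w.
Proof.
rewrite vnormE dotvDD -(@ger0_norm _ (vnorm u + vnorm w)); last first.
  by rewrite addr_ge0 ?vnorm_ge0.
rewrite -sqrtr_sqr ler_sqrt ?sqr_ge0 //.
have := CS u w; rewrite -!vnorm_sq; nra.
Qed.

Lemma vnormZ m (c : R) (u : 'cV[R]_m) : vnorm (c *: u) = `|c| * vnorm u.
Proof.
rewrite !vnormE -sqrtr_sqr -sqrtrM ?sqr_ge0 //; congr Num.sqrt.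
by rewrite /dotv mulr_sumr; apply: eq_bigr => k _; rewrite !mxE; ring.
Qed.

Lemma vnorm_le_sum m (u : 'cV[R]_m) : vnorm u <= \sum_k `|u k 0|.
Proof.
set S := \sum_k `|u k 0|.
have hS : 0 <= S by apply: sumr_ge0.
rewrite /vnorm -(ger0_norm hS) -sqrtr_sqr ler_sqrt ?sqr_ge0 //.
rewrite expr2 {2}/S mulr_sumr; apply: ler_sum => k _.
rewrite -[u k 0 ^+ 2]real_normK ?num_real // expr2.
apply: ler_wpM2r => //; rewrite /S (bigD1 k) //= lerDl; exact: sumr_ge0.
Qed.

End Norms.

Set Implicit Arguments. Unset Strict Implicit. Unset Printing Implicit Defensive.
Import Order.TTheory GRing.Theory Num.Theory.
Local Open Scope ring_scope.


Section Op.
Variable R : realType.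

Lemma sum_inj_le (I J : finType) (f : I -> J) (F : J -> R) :
  injective f -> (forall j, 0 <= F j) -> \sum_i F (f i) <= \sum_j F j.
Proof.
move=> inj F0.
have -> : \sum_i F (f i) = \sum_(i in predT) F (f i) by apply: eq_bigl.
rewrite -(big_imset _ (in2W inj)) [X in _ <= X](bigID (mem [set f x | x in predT])) /=.
by rewrite lerDl; apply: sumr_ge0.
Qed.

Definition opset m n (A : 'M[R]_(m,n)) :=
  ((fun v : 'cV[R]_n => vnorm (A *m v)) @` [set v : 'cV[R]_n | vnorm v <= 1])%classic.

Lemma opnorm_has_sup m n (A : 'M[R]_(m,n)) : has_sup (opset A).
Proof.
split.
  exists (vnorm (A *m 0)); by exists 0 => //=; rewrite vnorm0 ler01.
exists (\sum_k \sum_j `|A k j|) => y [v /= hv <-].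
apply: le_trans (vnorm_le_sum _) _; apply: ler_sum => k _.
rewrite mxE; apply: le_trans (ler_norm_sum _ _ _) _; apply: ler_sum => j _.
rewrite normrM; apply: ler_piMr => //; apply: le_trans (abs_le_vnorm _ _) hv.
Qed.

Lemma opnorm_ub m n (A : 'M[R]_(m,n)) v : vnorm v <= 1 -> vnorm (A *m v) <= opnorm A.
Proof. by move=> hv; apply: (sup_upper_bound (opnorm_has_sup A)); exists v. Qed.

Lemma opnorm_le m n (A : 'M[R]_(m,n)) c :
  (forall v, vnorm v <= 1 -> vnorm (A *m v) <= c) -> opnorm A <= c.
Proof.
move=> h; apply: ge_sup; first by case: (opnorm_has_sup A).
by move=> y [v hv <-]; exact: h.
Qed.

Lemma opnorm_ge0 m n (A : 'M[R]_(m,n)) : 0 <= opnorm A.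
Proof.
apply: le_trans (vnorm_ge0 (A *m 0)) (opnorm_ub _ _).
by rewrite vnorm0 ler01.
Qed.

Lemma opnorm_vec m n (A : 'M[R]_(m,n)) v : vnorm (A *m v) <= opnorm A * vnorm v.
Proof.
have [h0|hn] := eqVneq (vnorm v) 0.
  by rewrite (vnorm0_eq h0) mulmx0 vnorm0 vnorm0 mulr0.
set s := vnorm v; have hs : 0 < s by rewrite lt0r hn vnorm_ge0.
have := @opnorm_ub _ _ A (s^-1 *: v).
have hs' : 0 <= s^-1 by rewrite invr_ge0 ltW.
rewrite -scalemxAr !vnormZ (ger0_norm hs') -/s mulVf ?gt_eqF // lexx.
move=> /(_ isT) h.
have -> : vnorm (A *m v) = s * (s^-1 * vnorm (A *m v)).
  by rewrite mulrA mulfV ?gt_eqF // mul1r.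
by rewrite [_ * s]mulrC ler_pM2l.
Qed.

Lemma opnorm_mul m n p (A : 'M[R]_(m,n)) (B : 'M[R]_(n,p)) :
  opnorm (A *m B) <= opnorm A * opnorm B.
Proof.
apply: opnorm_le => v hv; rewrite -mulmxA.
apply: le_trans (opnorm_vec A _) _; apply: ler_wpM2l; first exact: opnorm_ge0.
apply: le_trans (opnorm_vec B v) _; rewrite -[X in _ <= X]mulr1.
by apply: ler_wpM2l; first exact: opnorm_ge0.
Qed.

Lemma opnorm_add m n (A B : 'M[R]_(m,n)) : opnorm (A + B) <= opnorm A + opnorm B.
Proof.
apply: opnorm_le => v hv; rewrite mulmxDl.
by apply: le_trans (vnormD _ _) _; apply: lerD; apply: opnorm_ub.
Qed.

Lemma opnorm0 m n : opnorm (0 : 'M[R]_(m,n)) <= 0.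
Proof. by apply: opnorm_le => v _; rewrite mul0mx vnorm0. Qed.

Lemma opnorm_sum m n (I : finType) (P : pred I) (F : I -> 'M[R]_(m,n)) :
  opnorm (\sum_(i | P i) F i) <= \sum_(i | P i) opnorm (F i).
Proof.
apply: (big_ind2 (fun A c => opnorm A <= c)) => //; first exact: opnorm0.
by move=> A1 c1 A2 c2 h1 h2; apply: le_trans (opnorm_add _ _) (lerD h1 h2).
Qed.

Lemma dotv_mx m (u w : 'cV[R]_m) : dotv u w = (u^T *m w) 0 0.
Proof. by rewrite /dotv mxE; apply: eq_bigr => k _; rewrite mxE. Qed.

Lemma dotv_tr m n (A : 'M[R]_(m,n)) v w : dotv (A^T *m v) w = dotv v (A *m w).
Proof. by rewrite !dotv_mx trmx_mul trmxK mulmxA. Qed.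

Lemma opnorm_tr m n (A : 'M[R]_(m,n)) : opnorm A^T <= opnorm A.
Proof.
apply: opnorm_le => v hv; set w := A^T *m v.
have h : vnorm w ^+ 2 <= opnorm A * vnorm w.
  rewrite vnorm_sq {1}/w dotv_tr.
  apply: le_trans (CS _ _) _.
  apply: le_trans (ler_wpM2r (vnorm_ge0 _) hv) _; rewrite mul1r.
  exact: opnorm_vec.
have := vnorm_ge0 w; have := opnorm_ge0 A; nra.
Qed.

Lemma opnorm_rowsub1 m m' (f : 'I_m' -> 'I_m) : injective f ->
  opnorm (mxsub f id (1%:M : 'M[R]_m)) <= 1.
Proof.
move=> inj; apply: opnorm_le => v hv; rewrite -rowsubE; apply: le_trans hv.
rewrite /vnorm ler_sqrt; last by apply: sumr_ge0 => j _; rewrite sqr_ge0.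
under eq_bigr do rewrite mxE.
exact: (@sum_inj_le _ _ f (fun j => v j 0 ^+ 2) inj (fun j => sqr_ge0 _)).
Qed.

Lemma opnorm_mxsub m n m' n' (f : 'I_m' -> 'I_m) (g : 'I_n' -> 'I_n) (A : 'M[R]_(m,n)) :
  injective f -> injective g -> opnorm (mxsub f g A) <= opnorm A.
Proof.
move=> hf hg.
have -> : mxsub f g A = mxsub f id 1%:M *m A *m (mxsub g id 1%:M)^T.
  by rewrite trmx_mxsub trmx1 mulmx_colsub -rowsubE mulmx1; apply/matrixP => a b; rewrite !mxE.
apply: le_trans (opnorm_mul _ _) _.
apply: le_trans (ler_wpM2l (opnorm_ge0 _) (le_trans (opnorm_tr _) (opnorm_rowsub1 hg))) _.
rewrite mulr1; apply: le_trans (opnorm_mul _ _) _.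
by rewrite -[X in _ <= X]mul1r; apply: ler_wpM2r (opnorm_ge0 _) _ _ (opnorm_rowsub1 hf).
Qed.

End Op.

Import Order.TTheory GRing.Theory Num.Theory.
Local Open Scope ring_scope.
Set Implicit Arguments. Unset Strict Implicit. Unset Printing Implicit Defensive.

Lemma Rank_inj (N : nat) (ni : 'I_N -> nat) i : injective (@tagnat.Rank N ni i).
Proof.
move=> j j' h; apply: val_inj; apply/eqP.
by have := tagnat.eq_Rank j j'; rewrite h !eqxx /=.
Qed.

Lemma exp_tri (R : realType) (g a b c : R) : 0 < g -> c <= a + b ->
  expR (- (g * a)) * expR (- (g * b)) <= expR (- (g * c)).
Proof. by move=> hg h; rewrite -expRD ler_expR; nra. Qed.

Section Blocks.
Variables (R : realType) (N : nat) (ni : 'I_N -> nat).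
Local Notation S := (\sum_(l < N) ni l)%N.
Local Notation MM := 'M[R]_S.

Lemma blk_mul (X Y : MM) l j : blk (X *m Y) l j = \sum_a blk X l a *m blk Y a j.
Proof.
have := mul_mxblock (fun i j => submxblock X i j) (fun i j => submxblock Y i j).
by rewrite !submxblockK => ->; rewrite /blk mxblockK.
Qed.

Lemma blk_tr (X : MM) l j : blk X^T l j = (blk X j l)^T.
Proof. by rewrite /blk tr_submxblock. Qed.

Lemma blk_norm (X : MM) l j : opnorm (blk X l j) <= opnorm X.
Proof. exact: opnorm_mxsub (@Rank_inj _ _ _) (@Rank_inj _ _ _). Qed.

Lemma blk_term (A M B : MM) l j : blk (A^T *m M *m B) l j =
  \sum_b \sum_a (blk A a l)^T *m blk M a b *m blk B b j.
Proof.
rewrite blk_mul; apply: eq_bigr => b _; rewrite blk_mul mulmx_suml.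
by apply: eq_bigr => a _; rewrite blk_tr.
Qed.

Lemma opnorm_mul3 p q r s (X : 'M[R]_(p,q)) (Y : 'M[R]_(p,r)) (Z : 'M[R]_(r,s)) :
  opnorm (X^T *m Y *m Z) <= opnorm X * opnorm Y * opnorm Z.
Proof.
apply: le_trans (opnorm_mul _ _) _; apply: ler_wpM2r; first exact: opnorm_ge0.
apply: le_trans (opnorm_mul _ _) _; apply: ler_wpM2r; first exact: opnorm_ge0.
exact: opnorm_tr.
Qed.

Lemma blk_term_le (A M B : MM) l j : opnorm (blk (A^T *m M *m B) l j) <=
  \sum_b \sum_a opnorm (blk A a l) * opnorm (blk M a b) * opnorm (blk B b j).
Proof.
rewrite blk_term; apply: le_trans (opnorm_sum _ _) _; apply: ler_sum => b _.
apply: le_trans (opnorm_sum _ _) _; apply: ler_sum => a _.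
exact: opnorm_mul3.
Qed.

End Blocks.

Import Order.TTheory GRing.Theory Num.Theory.
Local Open Scope ring_scope.
Set Implicit Arguments. Unset Strict Implicit. Unset Printing Implicit Defensive.

Lemma eqle (R : realType) (x y : R) : x = y -> x <= y.
Proof. by move->. Qed.

Section Main.
Variables (R : realType) (N : nat) (e : rel 'I_N) (ni : 'I_N -> nat).
Local Notation S := (\sum_(l < N) ni l)%N.
Local Notation MM := 'M[R]_S.
Local Notation dist := (@graph_dist R N e).
Hypothesis conn : forall a b : 'I_N, connect e a b.
Hypothesis hN : (0 < N)%N.

Lemma dist_tri a b c : dist a c <= dist a b + dist b c.
Proof. by rewrite /graph_dist -natrD ler_nat gdist_tri. Qed.
Lemma dist_ge0 a b : 0 <= dist a b.
Proof. exact: ler0n. Qed.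

Variables (L M : MM) (cL cM gamma tau rho : R) (i : 'I_N).
Hypothesis hcL : 1 <= cL.
Hypothesis hg : 0 < gamma.
Hypothesis htau : 1 <= tau.
Hypothesis hL : SED dist cL gamma L.
Hypothesis hM : SED_away dist i cM gamma M.
Hypothesis stab : tr_stable tau rho L.

Let x := N%:R * cL.
Lemma x_ge0 : 0 <= x.
Proof. by apply: mulr_ge0; [exact: ler0n | exact: le_trans ler01 hcL]. Qed.

Lemma cM_ge0 : 0 <= cM.
Proof.
have := le_trans (opnorm_ge0 _) (hM i i).
by rewrite pmulr_lge0 // expR_gt0.
Qed.

Lemma pow_sed k l a : N%:R * opnorm (blk (L ^+ k.+1) l a) <=
   x ^+ k.+1 * expR (- (gamma * dist l a)).
Proof.
elim: k l a => [|k IH] l a.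
  rewrite !expr1 /x -mulrA; apply: ler_wpM2l; [exact: ler0n | exact: hL].
rewrite exprSr blk_mul.
have h2 : forall b, N%:R * (opnorm (blk (L ^+ k.+1) l b) * opnorm (blk L b a)) <=
    x ^+ k.+1 * cL * expR (- (gamma * dist l a)).
  move=> b; rewrite mulrA.
  apply: le_trans (ler_pM _ _ (IH l b) (hL b a)) _.
  - by apply: mulr_ge0; [exact: ler0n| exact: opnorm_ge0].
  - exact: opnorm_ge0.
  rewrite mulrACA; apply: ler_wpM2l.
    by apply: mulr_ge0; [apply: exprn_ge0; exact: x_ge0 | exact: le_trans ler01 hcL].
  exact: exp_tri hg (dist_tri l b a).
apply: (@le_trans _ _ (N%:R * \sum_b opnorm (blk (L ^+ k.+1) l b) * opnorm (blk L b a))).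
  apply: ler_wpM2l; first exact: ler0n.
  apply: le_trans (opnorm_sum _ _) _; apply: ler_sum => b _; exact: opnorm_mul.
rewrite mulr_sumr.
apply: (@le_trans _ _ (\sum_(b < N) x ^+ k.+1 * cL * expR (- (gamma * dist l a)))).
  by apply: ler_sum => b _; exact: h2.
rewrite sumr_const card_ord -mulr_natl; apply: eqle; rewrite [x ^+ k.+2]exprSr /x; ring.
Qed.

Lemma exp_tri3 a b l j :
  expR (- (gamma * dist a l)) * expR (- (gamma * Num.max (dist i a) (dist i b))) *
  expR (- (gamma * dist b j)) <=
  expR (- (gamma * Num.max (dist i l) (dist i j))).
Proof.
rewrite -!expRD ler_expR.
have hD : Num.max (dist i l) (dist i j) <=
   dist a l + Num.max (dist i a) (dist i b) + dist b j.
  have h1 := dist_tri i a l; have h2 := dist_tri i b j.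
  have h3 : dist i a <= Num.max (dist i a) (dist i b) by rewrite le_max lexx.
  have h4 : dist i b <= Num.max (dist i a) (dist i b) by rewrite le_max lexx orbT.
  have h5 := dist_ge0 a l; have h6 := dist_ge0 b j.
  rewrite ge_max; apply/andP; split; lra.
by rewrite -!opprD lerN2 -!mulrDr ler_pM2l.
Qed.

Lemma term_sed k l j : opnorm (blk ((L ^+ k)^T *m M *m L ^+ k) l j) <=
  x ^+ (2 * k) * (cM * expR (- (gamma * Num.max (dist i l) (dist i j)))).
Proof.
case: k => [|k].
  by rewrite !expr0 trmx1 mul1mx mulmx1 mul1r; exact: hM.
set X := x ^+ (2 * k.+1) * (cM * expR (- (gamma * Num.max (dist i l) (dist i j)))).
have hN0 : 0 < N%:R ^+ 2 :> R by rewrite exprn_gt0 // ltr0n.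
rewrite -(ler_pM2l hN0).
apply: (@le_trans _ _ (N%:R ^+ 2 * \sum_b \sum_a opnorm (blk (L ^+ k.+1) a l) *
   opnorm (blk M a b) * opnorm (blk (L ^+ k.+1) b j))).
  by apply: ler_wpM2l; [exact: ltW | exact: blk_term_le].
rewrite mulr_sumr.
apply: (@le_trans _ _ (\sum_(b < N) \sum_(a < N) X)); last first.
  by apply: eqle; rewrite !sumr_const !card_ord -[X *+ N *+ N]mulr_natr -[X *+ N]mulr_natr; ring.
apply: ler_sum => b _; rewrite mulr_sumr; apply: ler_sum => a _.
have e1 := pow_sed k a l.
have e3 := pow_sed k b j.
have e2 := hM a b.
have g1 := opnorm_ge0 (blk (L ^+ k.+1) a l).
have g2 := opnorm_ge0 (blk M a b).
have g3 := opnorm_ge0 (blk (L ^+ k.+1) b j).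
have -> : N%:R ^+ 2 * (opnorm (blk (L ^+ k.+1) a l) * opnorm (blk M a b) *
     opnorm (blk (L ^+ k.+1) b j)) =
   (N%:R * opnorm (blk (L ^+ k.+1) a l)) * opnorm (blk M a b) *
     (N%:R * opnorm (blk (L ^+ k.+1) b j)) by ring.
apply: le_trans (ler_pM _ _ (ler_pM _ _ e1 e2) e3) _.
- by apply: mulr_ge0 => //; apply: mulr_ge0 => //; exact: ler0n.
- by apply: mulr_ge0 => //; exact: ler0n.
- by apply: mulr_ge0 => //; exact: ler0n.
- done.
have hx := x_ge0.
have hcM := cM_ge0.
rewrite /X mul2n -addnn exprD.
set E1 := expR (- (gamma * dist a l)).
set E2 := expR (- (gamma * Num.max (dist i a) (dist i b))).
set E3 := expR (- (gamma * dist b j)).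
set E := expR (- (gamma * Num.max (dist i l) (dist i j))).
have -> : x ^+ k.+1 * E1 * (cM * E2) * (x ^+ k.+1 * E3) =
   (x ^+ k.+1 * x ^+ k.+1 * cM) * (E1 * E2 * E3) by ring.
have -> : x ^+ k.+1 * x ^+ k.+1 * (cM * E) = (x ^+ k.+1 * x ^+ k.+1 * cM) * E by ring.
apply: ler_wpM2l; last exact: exp_tri3.
by rewrite !mulr_ge0 // exprn_ge0.
Qed.

End Main.

Import Order.TTheory GRing.Theory Num.Theory.
Local Open Scope ring_scope.
Set Implicit Arguments. Unset Strict Implicit. Unset Printing Implicit Defensive.

Lemma eqle2 (R : realType) (x y : R) : x = y -> x <= y.
Proof. by move->. Qed.

Section Tail.
Variables (R : realType) (N : nat) (ni : 'I_N -> nat).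
Local Notation S := (\sum_(l < N) ni l)%N.
Local Notation MM := 'M[R]_S.
Variables (L : MM) (tau rho : R).
Hypothesis stab : tr_stable tau rho L.

Lemma term_tail (Q : MM) k l j : opnorm (blk ((L ^+ k)^T *m Q *m L ^+ k) l j) <=
  opnorm Q * tau ^+ 2 * expR (- (2 * rho)) ^+ k.
Proof.
apply: le_trans; first by apply: blk_norm.
apply: le_trans; first by apply: opnorm_mul3.
have s := stab k; have g := opnorm_ge0 (L ^+ k); have gQ := opnorm_ge0 Q.
have -> : expR (- (2 * rho)) ^+ k = expR (- (rho * k%:R)) * expR (- (rho * k%:R)).
  by rewrite -expRM_natr -expRD; congr expR; ring.
have h := ler_pM g g s s.
apply: (@le_trans _ _ (opnorm Q * (opnorm (L ^+ k) * opnorm (L ^+ k)))).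
  by apply: eqle2; ring.
apply: le_trans; first exact: ler_wpM2l gQ _ _ h.
by apply: eqle2; ring.
Qed.

Lemma iterP (M P : MM) : P = L^T *m P *m L + M -> forall K : nat,
  P = (L ^+ K)^T *m P *m L ^+ K + \sum_(k < K) (L ^+ k)^T *m M *m L ^+ k.
Proof.
move=> hP; elim=> [|K IH].
  by rewrite expr0 trmx1 mul1mx mulmx1 big_ord0 addr0.
have step : (L ^+ K)^T *m P *m L ^+ K =
    (L ^+ K.+1)^T *m P *m L ^+ K.+1 + (L ^+ K)^T *m M *m L ^+ K.
  rewrite {1}hP mulmxDr mulmxDl; congr (_ + _).
  rewrite exprS -mulmxE trmx_mul !mulmxA //.
rewrite {1}IH step big_ord_recr /= -!addrA; congr (_ + _); exact: addrC.
Qed.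

End Tail.

Unset Implicit Arguments.
Import Order.TTheory GRing.Theory Num.Theory.
Local Open Scope ring_scope.

Lemma geo_id (R : realType) (y : R) m n : (m <= n)%N ->
  (1 - y) * \sum_(m <= k < n) y ^+ k = y ^+ m - y ^+ n.
Proof.
elim: n => [|n IH] hmn.
  by move: hmn; rewrite leqn0 => /eqP ->; rewrite big_geq // mulr0 subrr.
case: (leqP m n) => h.
  by rewrite big_nat_recr //= mulrDr IH // exprSr; ring.
have -> : m = n.+1 by apply/eqP; rewrite eqn_leq hmn h.
by rewrite big_geq // mulr0 subrr.
Qed.

Lemma geo_le (R : realType) (q : R) m n : 0 <= q -> q < 1 ->
  \sum_(m <= k < n) q ^+ k <= q ^+ m / (1 - q).
Proof.
move=> q0 q1.
have h1 : 0 < 1 - q by rewrite subr_gt0.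
case: (leqP m n) => hmn; last first.
  rewrite big_geq; last exact: ltnW.
  by apply: divr_ge0; [exact: exprn_ge0 | exact: ltW].
rewrite ler_pdivlMr // mulrC geo_id //.
by rewrite lerBlDr lerDl exprn_ge0.
Qed.

Lemma expR_natmul (R : realType) (x : R) n : 0 < x -> x ^+ n = expR (n%:R * ln x).
Proof. by move=> hx; rewrite expRM_natl lnK. Qed.

Lemma expR_le_inv (R : realType) (z : R) : 0 <= z -> expR (- z) <= (1 + z)^-1.
Proof.
move=> hz; rewrite expRN lef_pV2 ?posrE ?expR_gt0 //; last by rewrite ltr_pwDl.
exact: expR_ge1Dx.
Qed.

Lemma aux_2K (R : realType) (a b : R) : a <= b / 2 + 1 -> 2%:R * a <= b + 2.
Proof. move=> h; lra. Qed.
Lemma aux_hS (R : realType) (E Y YK : R) : 0 < E -> 4 <= Y -> YK <= E * Y ->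
  YK - 1 <= (Y - 1) * (2 * E).
Proof. move=> h1 h2 h3; nra. Qed.
Lemma aux_hy1 (R : realType) (Y : R) : 4 <= Y -> 0 < Y - 1.
Proof. move=> h; lra. Qed.
Lemma aux_N1 (R : realType) (c : R) : 0 <= c -> c <= 2 * c.
Proof. move=> h; lra. Qed.
Lemma aux_y (R : realType) (x : R) : 2 <= x -> 4 <= x ^+ 2.
Proof. move=> h; rewrite expr2; nra. Qed.
Lemma aux_ord (N : nat) (a b : 'I_N) : (N <= 1)%N -> a = b.
Proof.
move=> h; apply: val_inj => /=.
have : (a < 1)%N by apply: leq_trans (ltn_ord a) h.
have : (b < 1)%N by apply: leq_trans (ltn_ord b) h.
by rewrite !ltnS !leqn0 => /eqP -> /eqP ->.
Qed.
Lemma aux_tail (R : realType) (rho t k : R) : 0 < rho -> t / 2 < k ->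
  k * - (2 * rho) <= - (rho * t).
Proof. move=> h1 h2; nra. Qed.

Lemma aux_lim (R : realType) (Z q' K rho dl b T : R) : 0 <= Z -> 0 < dl -> 0 < rho ->
  0 <= K -> Z / (2 * rho * dl) < K -> q' <= (1 + 2 * rho * K)^-1 ->
  b <= T + Z * q' -> dl = b - T -> False.
Proof.
move=> hZ hdl hr hK h1 h2 h3 h4.
have p1 : 0 < 2 * rho * dl by rewrite !mulr_gt0.
have p2 : 0 < 1 + 2 * rho * K by rewrite ltr_wpDr // !mulr_ge0 // ltW.
have h5 : Z < K * (2 * rho * dl) by rewrite -ltr_pdivrMr.
have h6 : Z * q' <= Z * (1 + 2 * rho * K)^-1 by apply: ler_wpM2l.
have h7 : Z * (1 + 2 * rho * K)^-1 < dl.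
  by rewrite ltr_pdivrMr //; nra.
lra.
Qed.

Import Order.TTheory GRing.Theory Num.Theory.
Local Open Scope ring_scope.

Theorem lemma1 (R : realType) (N : nat) (e : rel 'I_N) (ni : 'I_N -> nat)
  (i : 'I_N) (tau rho cL cM gamma : R)
  (L M P : 'M[R]_(\sum_(l < N) ni l)) :
  (0 < N)%N ->
  symmetric e ->
  (forall a b : 'I_N, connect e a b) ->
  1 <= tau -> 0 < rho -> 1 <= cL -> 0 < gamma ->
  tr_stable tau rho L ->
  SED (graph_dist e) cL gamma L ->
  SED_away (graph_dist e) i cM gamma M ->
  P = L^T *m P *m L + M ->
  SED_away (graph_dist e) i
    (opnorm M * tau ^+ 2 / (1 - expR (- (2 * rho))) + 2 * cM)
    (rho * gamma / (rho + ln (N%:R * cL)))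
    P.
Proof.
move=> hN hsym conn htau hrho hcL hg stab hL hM hP l j.
set x := N%:R * cL.
set D := Num.max (graph_dist e i l) (graph_dist e i j).
set q := expR (- (2 * rho)).
set A := opnorm M * tau ^+ 2.
set EP := expR (- (rho * gamma / (rho + ln x) * D)).
have hN1 : 1 <= N%:R :> R by rewrite ler1n.
have hx1 : 1 <= x by have := ler_pM ler01 ler01 hN1 hcL; rewrite mulr1.
have hlnx : 0 <= ln x := ln_ge0 hx1.
have hden : 0 < rho + ln x by apply: ltr_wpDr.
have hD0 : 0 <= D by rewrite le_max ler0n.
set t := gamma * D / (rho + ln x).
have ht0 : 0 <= t by apply: divr_ge0; [apply: mulr_ge0 => //; exact: ltW | exact: ltW].
have htD : t * (rho + ln x) = gamma * D by rewrite /t divfK // gt_eqF.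
have hgP : rho * gamma / (rho + ln x) * D = rho * t by rewrite /t; ring.
set K0 := (Num.truncn (t / 2)).+1.
have [hK0a hK0b] : t / 2 < K0%:R /\ K0%:R <= t / 2 + 1.
  have := truncn_itv (divr_ge0 ht0 (ler0n R 2)) => /andP [h1 h2].
  by split => //; rewrite /K0 -addn1 natrD lerD2r.
have hq : 0 <= q := expR_ge0 _.
have hq1 : q < 1 by rewrite expR_lt1 oppr_lt0 mulr_gt0.
have hq1' : 0 < 1 - q by rewrite subr_gt0.
have hcM := cM_ge0 hM.
have hA : 0 <= A.
  by apply: mulr_ge0; [exact: opnorm_ge0 | apply: exprn_ge0; exact: le_trans ler01 htau].
set E0 := expR (- (gamma * D)).
set term := fun k => (L ^+ k)^T *m M *m L ^+ k.
have hE : E0 * expR (t * ln x) = EP.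
  rewrite /E0 /EP -expRD hgP; congr expR; rewrite -htD; ring.
have head : \sum_(0 <= k < K0) opnorm (blk (term k) l j) <= 2 * cM * EP.
  apply: (@le_trans _ _ (\sum_(0 <= k < K0) (x ^+ 2) ^+ k * (cM * E0))).
    apply: ler_sum => k _; rewrite -exprM; exact: (term_sed conn hN hcL hg hL hM k l j).
  rewrite -mulr_suml.
  case: (ltnP 1 N) => hN2.
    have hx2 : 2 <= x.
      have h2 : 2 <= N%:R :> R by rewrite (ler_nat R 2 N).
      by have := ler_pM (ler0n R 2) ler01 h2 hcL; rewrite mulr1.
    set y := x ^+ 2.
    have hy : 4 <= y := @aux_y _ _ hx2.
    have hx0 : 0 < x := lt_le_trans ltr01 hx1.
    have hsum : (y - 1) * \sum_(0 <= k < K0) y ^+ k = y ^+ K0 - 1.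
      have := @geo_id R y 0 K0 (leq0n K0); rewrite expr0 => h.
      by apply: (@oppr_inj _); rewrite -mulNr opprB h opprB.
    have hyK : y ^+ K0 <= expR (t * ln x) * y.
      rewrite /y -exprM (@expR_natmul R x (2 * K0) hx0) (@expR_natmul R x 2 hx0) -expRD ler_expR.
      rewrite -mulrDl; apply: ler_wpM2r => //; rewrite natrM; exact: aux_2K.
    have hS : \sum_(0 <= k < K0) y ^+ k <= 2 * expR (t * ln x).
      have hy1 : 0 < y - 1 := @aux_hy1 _ _ hy.
      rewrite -(ler_pM2l hy1) hsum.
      exact: (@aux_hS _ _ _ _ (expR_gt0 _) hy hyK).
    have hE0 : 0 <= E0 := expR_ge0 _.
    rewrite -hE; apply: (@le_trans _ _ ((2 * expR (t * ln x)) * (cM * E0))).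
      by apply: ler_wpM2r => //; exact: mulr_ge0.
    by apply: eqle2; ring.
  have eqI : forall a b : 'I_N, a = b.
    by move=> a b; apply: aux_ord.
  have D0 : D = 0.
    by rewrite /D (eqI l i) (eqI j i) /graph_dist gdist_refl // maxxx.
  have t0 : t = 0 by rewrite /t D0 mulr0 mul0r.
  have K01 : K0 = 1%N by rewrite /K0 t0 mul0r truncn0.
  rewrite K01 big_nat1 expr0 mul1r /E0 /EP D0 !mulr0 oppr0 expR0 !mulr1.
  exact: aux_N1.
have hqK0 : q ^+ K0 <= EP.
  by rewrite /q /EP -expRM_natl ler_expR hgP; exact: aux_tail.
have tail : forall K, \sum_(K0 <= k < K) opnorm (blk (term k) l j) <= A / (1 - q) * EP.
  move=> K.
  apply: (@le_trans _ _ (\sum_(K0 <= k < K) A * q ^+ k)).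
    by apply: ler_sum => k _; exact: (term_tail stab M k l j).
  rewrite -mulr_sumr.
  apply: (@le_trans _ _ (A * (q ^+ K0 / (1 - q)))).
    by apply: ler_wpM2l => //; exact: geo_le.
  rewrite mulrCA mulrC.
  apply: ler_wpM2l => //; apply: divr_ge0 => //; exact: ltW.
have main : forall K, (K0 <= K)%N -> opnorm (blk P l j) <=
    (A / (1 - q) + 2 * cM) * EP + opnorm P * tau ^+ 2 * q ^+ K.
  move=> K hK.
  have -> : blk P l j = blk ((L ^+ K)^T *m P *m L ^+ K) l j + \sum_(k < K) blk (term k) l j.
    by rewrite {1}(iterP hP K) /blk submxblockD submxblock_sum.
  apply: le_trans; first exact: opnorm_add.
  apply: le_trans.
    apply: lerD; first exact: (term_tail stab P K l j).
    exact: opnorm_sum.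
  rewrite -(big_mkord xpredT (fun k => opnorm (blk (term k) l j))).
  rewrite (@big_cat_nat _ _ _ K0) //=.
  rewrite (addrC _ (opnorm P * tau ^+ 2 * q ^+ K)); apply: lerD; first exact: lexx.
  apply: le_trans (lerD head (tail K)) _.
  by rewrite (mulrDl (A / (1 - q))) (addrC (2 * cM * EP)).

rewrite leNgt; apply/negP => hlt.
set Z := opnorm P * tau ^+ 2.
set dl := opnorm (blk P l j) - (A / (1 - q) + 2 * cM) * EP.
have hdl : 0 < dl.
  by rewrite /dl subr_gt0.
have hZ : 0 <= Z.
  by apply: mulr_ge0; [exact: opnorm_ge0 | apply: exprn_ge0; exact: le_trans ler01 htau].
have h2r : 0 < 2 * rho * dl by rewrite !mulr_gt0.
set K := maxn K0 (Num.truncn (Z / (2 * rho * dl))).+1.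
have hKK : Z / (2 * rho * dl) < K%:R.
  have := truncn_itv (divr_ge0 hZ (ltW h2r)) => /andP [_ h].
  by apply: lt_le_trans h _; rewrite ler_nat leq_maxr.
have hm := main K (leq_maxl _ _).
have hqK : q ^+ K <= (1 + 2 * rho * K%:R)^-1.
  rewrite /q -expRM_natl.
  have -> : K%:R * - (2 * rho) = - (2 * rho * K%:R) by rewrite mulrN mulrC.
  by apply: expR_le_inv; rewrite !mulr_ge0 // ltW.
exact: (@aux_lim _ _ _ _ _ _ _ _ hZ hdl hrho (ler0n R K) hKK hqK hm erefl).
Qed.
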